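(* Let $L$ be a distributive lattice (not necessarily bounded), let $n\ge 1$, and for each $i\in[n]=\{1,\dots,n\}$ let $a_i,b_i\in L$ with $a_i<b_i$. For $I\subseteq[n]$ let $\widehat{\mathbf e}_I\in L^n$ be the tuple whose $i$-th component is $b_i$ if $i\in I$ and $a_i$ if $i\notin I$, and let $D=\{\widehat{\mathbf e}_I : I\subseteq[n]\}$. Let $f\colon D\to L$. Then there exists a lattice polynomial function $p\colon L^n\to L$ with $p|_D=f$ if and only if $f$ is monotone and satisfies $$f(\widehat{\mathbf e}_{I\cup\{k\}})\wedge a_k\le f(\widehat{\mathbf e}_I)\le f(\widehat{\mathbf e}_{I\setminus\{k\}})\vee b_k\quad\text{for all } I\subseteq[n],\ k\in[n].\qquad(\star)$$ In this case, a polynomial function $p$ over $L$ satisfies $p|_D=f$ if and only if $c_I^-\le c_I\le c_I^+$ for all $I\subseteq[n]$, where $c_I$ are the coefficients of the (monotone) DNF of $p$ and $c_I^-,c_I^+$ are as defined in the context. In particular, one such $p$ is the polynomial function $p_0$ given by $$p_0(\mathbf x)=\bigvee_{I\subseteq[n]}\Bigl(f(\widehat{\mathbf e}_I)\wedge\bigwedge_{i\in I}x_i\Bigr).$$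
   Context: A lattice polynomial function on $L$ is a function $L^n\to L$ obtainable as a composition of $\wedge$, $\vee$, projections and constants from $L$. Let $0$ and $1$ denote the least and greatest elements of $L$ if they exist, and otherwise external elements adjoined below and above $L$. Every polynomial function $p$ over $L$ has a unique representation in disjunctive normal form (DNF) $p(\mathbf x)=\bigvee_{I\subseteq[n]}(c_I\wedge\bigwedge_{i\in I}x_i)$ with coefficients $c_I\in L\cup\{0,1\}$ that are monotone ($I\subseteq J\Rightarrow c_I\le c_J$), $c_\emptyset\neq 1$, $c_{[n]}\neq 0$; these are ''the coefficients of the DNF of $p$''. Embed $L$ into the Boolean algebra $B$ generated by $L$ (Birkhoff–Priestley), with bounds $0,1$ (coinciding with those of $L$ if $L$ is bounded) and complement $x\mapsto x'$. For $I\subseteq[n]$ define in $B$: $c_I^-=f(\widehat{\mathbf e}_I)\wedge\bigwedge_{i\notin I}a_i'$ and $c_I^+=f(\widehat{\mathbf e}_I)\vee\bigvee_{i\in I}b_i'$. $f$ monotone means $I\subseteq J\Rightarrow f(\widehat{\mathbf e}_I)\le f(\widehat{\mathbf e}_J)$. *)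

(* Defs.v *)
From mathcomp Require Import all_boot all_order.
Set Implicit Arguments. Unset Strict Implicit. Unset Printing Implicit Defensive.
Import Order.TTheory.
Local Open Scope order_scope.

Section Defs.
Context {d : Order.disp_t} {L : distrLatticeType d} {n : nat}.

Inductive lterm : Type :=
  | LVar of 'I_n
  | LConst of L
  | LMeet of lterm & lterm
  | LJoin of lterm & lterm.

Fixpoint leval (t : lterm) (x : 'I_n -> L) : L :=
  match t with
  | LVar i => x i
  | LConst c => c
  | LMeet t1 t2 => leval t1 x `&` leval t2 x
  | LJoin t1 t2 => leval t1 x `|` leval t2 x
  end.

Definition polyfun (p : ('I_n -> L) -> L) : Prop :=
  exists t : lterm, forall x, p x = leval t x.

Definition ehat (a b : 'I_n -> L) (I : {set 'I_n}) : 'I_n -> L :=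
  fun i => if i \in I then b i else a i.

Definition restricts (p : ('I_n -> L) -> L) (a b : 'I_n -> L)
  (f : {set 'I_n} -> L) : Prop :=
  forall I : {set 'I_n}, p (ehat a b I) = f I.

Definition fmonotone (f : {set 'I_n} -> L) : Prop :=
  forall I J : {set 'I_n}, I \subset J -> f I <= f J.

Definition star_cond (a b : 'I_n -> L) (f : {set 'I_n} -> L) : Prop :=
  forall (I : {set 'I_n}) (k : 'I_n),
    (f (k |: I) `&` a k <= f I) && (f I <= f (I :\ k) `|` b k).

(* p_0(x) = \bigvee_I (f I /\ \bigwedge_{i in I} x_i); the empty meet is
   omitted (it is the external top) and the I = set0 term is f set0. *)
Definition p0 (f : {set 'I_n} -> L) (x : 'I_n -> L) : L :=
  foldr (fun I acc => acc `|` foldr (fun i m => m `&` x i) (f I) (enum I))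
        (f set0) (enum [set: {set 'I_n}]).

Section Bool.
Context {dB : Order.disp_t} {B : ctbDistrLatticeType dB}.

Definition bool_embedding (phi : L -> B) : Prop :=
  [/\ injective phi,
      forall x y, phi (x `&` y) = phi x `&` phi y,
      forall x y, phi (x `|` y) = phi x `|` phi y,
      forall l0, (forall y, l0 <= y) -> phi l0 = \bot
    & forall l1, (forall y, y <= l1) -> phi l1 = \top].

(* c (with values in B) is the family of coefficients of the DNF of p,
   with L u {0,1} identified with phi(L) u {\bot, \top} *)
Definition dnf_coeffs (phi : L -> B) (p : ('I_n -> L) -> L)
  (c : {set 'I_n} -> B) : Prop :=
  [/\ forall I, (exists l, c I = phi l) \/ c I = \bot \/ c I = \top,
      forall I J : {set 'I_n}, I \subset J -> c I <= c J,
      c set0 != \top,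
      c [set: 'I_n] != \bot
    & forall x : 'I_n -> L,
        phi (p x) = \join_(I : {set 'I_n}) (c I `&` \meet_(i in I) phi (x i))].

Definition cminus (phi : L -> B) (a : 'I_n -> L) (f : {set 'I_n} -> L)
  (I : {set 'I_n}) : B :=
  phi (f I) `&` \meet_(i | i \notin I) ~` phi (a i).

Definition cplus (phi : L -> B) (b : 'I_n -> L) (f : {set 'I_n} -> L)
  (I : {set 'I_n}) : B :=
  phi (f I) `|` \join_(i in I) ~` phi (b i).

Definition coeff_bounds (phi : L -> B) (a b : 'I_n -> L) (f : {set 'I_n} -> L)
  (c : {set 'I_n} -> B) : Prop :=
  forall I : {set 'I_n}, (cminus phi a f I <= c I) && (c I <= cplus phi b f I).
End Bool.
End Defs.

Definition strict_lt {d : Order.disp_t} {L : distrLatticeType d} (x y : L) : bool :=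
  (x < y)%O.

(* Main.v *)
Require Import Defs.
From mathcomp Require Import all_boot all_order.
Set Implicit Arguments. Unset Strict Implicit. Unset Printing Implicit Defensive.
Import Order.Theory.
Local Open Scope order_scope.

Lemma setDD1 n (J T : {set 'I_n}) k : (J :\ k) :\: T = (J :\: T) :\ k.
Proof. by apply/setP => i; rewrite !inE; case: (i == k); case: (i \in T). Qed.
Lemma setDU1 n (J T : {set 'I_n}) k : J :\: (k |: T) = (J :\: T) :\ k.
Proof. by apply/setP => i; rewrite !inE; case: (i == k); case: (i \in T). Qed.

Lemma card_dec n (S : {set 'I_n}) k m : k \in S -> #|S| = m.+1 -> #|S :\ k| = m.
Proof. by move=> kS; rewrite (cardsD1 k S) kS add1n => -[]. Qed.

Section Gen.
Context {dX : Order.disp_t} {X : distrLatticeType dX} {n : nat}.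
Variables (F : {set 'I_n} -> X) (A Bv : 'I_n -> X).
Hypothesis Hmono : forall I J : {set 'I_n}, I \subset J -> F I <= F J.
Hypothesis Hs1 : forall I k, F (k |: I) `&` A k <= F I.
Hypothesis Hs2 : forall I k, F I <= F (I :\ k) `|` Bv k.

Lemma up_gen (J I : {set 'I_n}) y : y <= F I -> (forall i, i \in I -> i \notin J -> y <= A i) ->
  y <= F J.
Proof.
move: {2}#|I :\: J| (erefl #|I :\: J|) => m; elim: m I y => [|m IH] I y hc hy hA.
  apply: (le_trans hy); apply: Hmono; apply/subsetP => i iI.
  apply/negPn/negP => iJ; have : i \in I :\: J by rewrite inE iI iJ.
  by move/cards0_eq: hc => ->; rewrite inE.
have [k kIJ] : exists k, k \in I :\: J.
  by apply/set0Pn; apply/eqP => e; rewrite e cards0 in hc.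
move: (kIJ); rewrite inE => /andP[kJ kI].
apply: (IH (I :\ k)).
- by rewrite setDD1; apply: card_dec.
- apply: le_trans (Hs1 (I :\ k) k); rewrite setD1K // lexI hy hA //.
- by move=> i; rewrite inE => /andP[_ iI] iJ; apply: hA.
Qed.

Variable G : {set 'I_n} -> X.
Hypothesis Gmono : forall I J : {set 'I_n}, I \subset J -> G I <= G J.
Hypothesis Gbase : forall (J : {set 'I_n}) y, y <= F J -> (forall i, i \in J -> y <= Bv i) -> y <= G J.

Lemma down_gen (J : {set 'I_n}) y : y <= F J -> y <= G J.
Proof.
have : set0 \subset J by apply: sub0set.
have : forall i, i \in (set0 : {set 'I_n}) -> y <= Bv i by move=> i; rewrite inE.
move: (set0 : {set 'I_n}) => T.
move: {2}#|J :\: T| (erefl #|J :\: T|) => m; elim: m J T y => [|m IH] J T y hc hB hT hy.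
  apply: Gbase => // i iJ; apply: hB.
  apply/negPn/negP => iT; have : i \in J :\: T by rewrite inE iT iJ.
  by move/cards0_eq: hc => ->; rewrite inE.
have [k kJT] : exists k, k \in J :\: T.
  by apply/set0Pn; apply/eqP => e; rewrite e cards0 in hc.
move: (kJT); rewrite inE => /andP[kT kJ].
have -> : y = (y `&` F (J :\ k)) `|` (y `&` Bv k).
  by rewrite -meetUr; apply/esym/meet_idPl/(le_trans hy).
rewrite leUx; apply/andP; split.
- apply: (le_trans _ (Gmono (subD1set J k))).
  apply: (IH _ T).
  + by rewrite setDD1; apply: card_dec.
  + by move=> i iT; apply: le_trans (leIl _ _) (hB _ iT).
  + apply/subsetP => i iT; rewrite !inE (subsetP hT _ iT) andbT.
    by apply/eqP => e; rewrite -e iT in kT.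
  + exact: leIr.
- apply: (IH _ (k |: T)).
  + by rewrite setDU1; apply: card_dec.
  + move=> i; rewrite !inE => /orP[/eqP -> | iT]; first exact: leIr.
    by apply: le_trans (leIl _ _) (hB _ iT).
  + by rewrite subUset sub1set kJ hT.
  + by apply: le_trans (leIl _ _) hy.
Qed.
End Gen.

Section Terms.
Context {d : Order.disp_t} {L : distrLatticeType d} {n : nat}.

Lemma leval_mono (t : @lterm d L n) x y : (forall i, x i <= y i) -> leval t x <= leval t y.
Proof.
move=> h; elim: t => //= [t1 IH1 t2 IH2|t1 IH1 t2 IH2].
- by rewrite lexI; apply/andP; split; [apply: le_trans (leIl _ _) IH1 | apply: le_trans (leIr _ _) IH2].
- by rewrite leUx; apply/andP; split; [apply: le_trans IH1 (leUl _ _) | apply: le_trans IH2 (leUr _ _)].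
Qed.

Lemma leval_meet (t : @lterm d L n) x y c : (forall i, y i `&` c <= x i) ->
  leval t y `&` c <= leval t x.
Proof.
move=> h; elim: t => /= [k|c0|t1 IH1 t2 IH2|t1 IH1 t2 IH2].
- exact: h.
- exact: leIl.
- rewrite lexI; apply/andP; split.
    by apply: le_trans IH1; rewrite lexI leIr andbT; apply: le_trans (leIl _ _) (leIl _ _).
  by apply: le_trans IH2; rewrite lexI leIr andbT; apply: le_trans (leIl _ _) (leIr _ _).
- rewrite meetUl leUx; apply/andP; split.
    by apply: le_trans IH1 (leUl _ _).
  by apply: le_trans IH2 (leUr _ _).
Qed.

Lemma leval_join (t : @lterm d L n) x y c : (forall i, x i <= y i `|` c) ->
  leval t x <= leval t y `|` c.
Proof.
move=> h; elim: t => /= [k|c0|t1 IH1 t2 IH2|t1 IH1 t2 IH2].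
- exact: h.
- exact: leUl.
- apply: le_trans (_ : (leval t1 y `|` c) `&` (leval t2 y `|` c) <= _).
    by rewrite lexI; apply/andP; split; [apply: le_trans (leIl _ _) IH1 | apply: le_trans (leIr _ _) IH2].
  by rewrite -joinIl.
- rewrite leUx; apply/andP; split.
    apply: le_trans IH1 _; rewrite leUx leUr andbT; apply: le_trans (leUl _ _) (leUl _ _).
  apply: le_trans IH2 _; rewrite leUx leUr andbT; apply: le_trans (leUr _ _) (leUl _ _).
Qed.

Definition mt (z : L) (s : seq 'I_n) (x : 'I_n -> L) :=
  foldr (fun i m => m `&` x i) z s.

Lemma le_mt y z s x : (y <= mt z s x) = (y <= z) && all (fun i => y <= x i) s.
Proof.
elim: s => [|i s IH] /=; first by rewrite andbT.
by rewrite lexI IH; case: (y <= z); case: (y <= x i); case: all.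
Qed.

Lemma mt_lez z s x : mt z s x <= z.
Proof. by move: (le_refl (mt z s x)); rewrite le_mt => /andP[]. Qed.

Lemma mt_lex z s x i : i \in s -> mt z s x <= x i.
Proof. by move=> iS; move: (le_refl (mt z s x)); rewrite le_mt => /andP[_ /allP]; apply. Qed.

Lemma mt_mono z s x y : (forall i, x i <= y i) -> mt z s x <= mt z s y.
Proof.
move=> h; rewrite le_mt mt_lez /=; apply/allP => i iS.
exact: le_trans (mt_lex _ _ iS) (h i).
Qed.

Definition mt_t (z : L) (s : seq 'I_n) : @lterm d L n :=
  foldr (fun i m => LMeet m (LVar i)) (LConst z) s.

Lemma mt_tE z s x : leval (mt_t z s) x = mt z s x.
Proof. by elim: s => //= i s ->. Qed.

Variable f : {set 'I_n} -> L.

Lemma p0E x : p0 f x = foldr (fun I acc => acc `|` mt (f I) (enum I) x) (f set0)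
   (enum [set: {set 'I_n}]).
Proof. by []. Qed.

Definition p0_t : @lterm d L n :=
  foldr (fun I acc => LJoin acc (mt_t (f I) (enum I))) (LConst (f set0))
   (enum [set: {set 'I_n}]).

Lemma polyfun_p0 : polyfun (p0 f).
Proof.
exists p0_t => x; rewrite p0E /p0_t.
by elim: (enum _) => //= I s ->; rewrite mt_tE.
Qed.

Lemma p0_le x w : (p0 f x <= w) = (f set0 <= w) &&
   all (fun I => mt (f I) (enum I) x <= w) (enum [set: {set 'I_n}]).
Proof.
rewrite p0E; elim: (enum _) => [|I s IH] /=; first by rewrite andbT.
by rewrite leUx IH; case: (f set0 <= w); case: (_ <= w); case: all.
Qed.

Lemma le_p0 x I : mt (f I) (enum I) x <= p0 f x.
Proof.
move: (le_refl (p0 f x)); rewrite p0_le => /andP[_ /allP]; apply.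
by rewrite mem_enum inE.
Qed.

Lemma le_p0_0 x : f set0 <= p0 f x.
Proof. by move: (le_refl (p0 f x)); rewrite p0_le => /andP[]. Qed.

Lemma p0_mono x y : (forall i, x i <= y i) -> p0 f x <= p0 f y.
Proof.
move=> h; rewrite p0_le le_p0_0 /=; apply/allP => I _.
exact: le_trans (mt_mono _ _ h) (le_p0 _ _).
Qed.
End Terms.

Section Part13.
Context {d : Order.disp_t} {L : distrLatticeType d} {n : nat}.
Variables (a b : 'I_n -> L) (f : {set 'I_n} -> L).
Hypothesis hab : forall i, a i <= b i.

Lemma ehat_mono (I J : {set 'I_n}) : I \subset J -> forall i, ehat a b I i <= ehat a b J i.
Proof.
move=> sIJ i; rewrite /ehat; case: ifP => iI.
  by rewrite (subsetP sIJ _ iI).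
by case: ifP.
Qed.

Lemma part1_only (p : ('I_n -> L) -> L) : polyfun p -> restricts p a b f ->
  fmonotone f /\ star_cond a b f.
Proof.
move=> [t ht] hr; split.
  move=> I J sIJ; rewrite -!hr !ht; apply: leval_mono; exact: ehat_mono.
move=> I k; apply/andP; split; rewrite -!hr !ht.
- apply: leval_meet => i; rewrite /ehat !inE.
  case: (i =P k) => [->|ne] /=.
    by case: (k \in I); [apply: leIl | apply: leIr].
  by apply: leIl.
- apply: leval_join => i; rewrite /ehat !inE.
  case: (i =P k) => [->|ne] /=.
    by case: (k \in I); apply: lexUr.
  by apply: leUl.
Qed.

Hypothesis Hmono : fmonotone f.
Hypothesis Hstar : star_cond a b f.

Lemma Hs1L (I : {set 'I_n}) k : f (k |: I) `&` a k <= f I.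
Proof. by case/andP: (Hstar I k). Qed.
Lemma Hs2L (I : {set 'I_n}) k : f I <= f (I :\ k) `|` b k.
Proof. by case/andP: (Hstar I k). Qed.

Lemma p0_restricts : restricts (p0 f) a b f.
Proof.
move=> J; apply: le_anti; apply/andP; split.
- rewrite p0_le (Hmono (sub0set J)) /=; apply/allP => I _.
  apply: (up_gen Hmono Hs1L (I := I)); first exact: mt_lez.
  move=> i iI iJ; have := mt_lex (f I) (ehat a b J) (_ : i \in enum I).
  by rewrite mem_enum /ehat (negbTE iJ); apply.
- apply: (down_gen Hs2L (G := fun J => p0 f (ehat a b J))) => //.
    by move=> I K sIK; apply: p0_mono; apply: ehat_mono.
  move=> K y hy hb; apply: le_trans (le_p0 _ _ K).
  rewrite le_mt hy /=; apply/allP => i; rewrite mem_enum => iK.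
  by rewrite /ehat iK; apply: hb.
Qed.
End Part13.

Lemma shunt {dB : Order.disp_t} {B : ctbDistrLatticeType dB} (x y z : B) :
  (x `&` y <= z) = (x <= z `|` ~` y).
Proof.
apply/idP/idP => h.
- have -> : x = (x `&` y) `|` (x `&` ~` y) by rewrite -meetUr joinxC meetx1.
  rewrite leUx; apply/andP; split; first exact: le_trans h (leUl _ _).
  exact: le_trans (leIr _ _) (leUr _ _).
- apply: le_trans (_ : (z `|` ~` y) `&` y <= _).
    by rewrite lexI leIr andbT; apply: le_trans (leIl _ _) h.
  by rewrite meetUl meetCx joinx0 leIl.
Qed.

Section Part2.
Context {d : Order.disp_t} {L : distrLatticeType d} {n : nat}.
Variables (a b : 'I_n -> L) (f : {set 'I_n} -> L).
Hypothesis hab : forall i, a i <= b i.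
Context {dB : Order.disp_t} {B : ctbDistrLatticeType dB} (phi : L -> B).
Hypothesis hphi : bool_embedding phi.
Variable c : {set 'I_n} -> B.
Hypothesis cmono : forall I J : {set 'I_n}, I \subset J -> c I <= c J.

Definition g (J : {set 'I_n}) : B :=
  \join_(I : {set 'I_n}) (c I `&` \meet_(i in I) phi (ehat a b J i)).

Lemma phi_le x y : x <= y -> phi x <= phi y.
Proof.
case: hphi => _ hm _ _ _ /meet_idPl e; apply/meet_idPl; by rewrite -hm e.
Qed.

Lemma pe J i : phi (ehat a b J i) = if i \in J then phi (b i) else phi (a i).
Proof. by rewrite /ehat; case: ifP. Qed.

Lemma pe_leb J i : phi (ehat a b J i) <= phi (b i).
Proof. by rewrite pe; case: ifP => _ //; apply: phi_le. Qed.

Lemma part2_fwd : (forall J, g J = phi (f J)) -> coeff_bounds phi a b f c.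
Proof.
move=> hg I; apply/andP; split.
- rewrite /cminus -hg shunt; apply/joinsP => K _; rewrite -shunt.
  case: (boolP (K \subset I)) => [sKI|/subsetPn [i iK iI]].
    by apply: le_trans (leIl _ _) _; apply: le_trans (leIl _ _) (cmono sKI).
  apply: le_trans (_ : phi (a i) `&` ~` phi (a i) <= _); last by rewrite meetxC le0x.
  rewrite lexI; apply/andP; split.
    apply: le_trans (leIl _ _) _; apply: le_trans (leIr _ _) _.
    by apply: le_trans (meets_inf _ iK) _; rewrite pe (negbTE iI).
  by apply: le_trans (leIr _ _) _; apply: meets_inf.
- rewrite /cplus -hg -(complK (\join_(i in I) _)) -shunt.
  rewrite /g; apply: le_trans _ (joins_sup (j := I) (P := fun _ => true) (fun K => c K `&` \meet_(i in K) phi (ehat a b I i)) isT).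
  rewrite lexI leIl /=; apply: le_trans (leIr _ _) _.
  apply/meetsP => i iI; rewrite pe iI leCx.
  by apply: (joins_sup (P := fun i => i \in I)).
Qed.

Hypothesis Hmono : fmonotone f.
Hypothesis Hstar : star_cond a b f.
Hypothesis hcb : coeff_bounds phi a b f c.

Let F I := phi (f I).
Lemma FmonoB (I J : {set 'I_n}) : I \subset J -> F I <= F J.
Proof. by move=> s; apply: phi_le; apply: Hmono. Qed.
Lemma Hs1B (I : {set 'I_n}) k : F (k |: I) `&` phi (a k) <= F I.
Proof. case: (hphi) => _ hm _ _ _; rewrite /F -hm; apply: phi_le; exact: Hs1L. Qed.
Lemma Hs2B (I : {set 'I_n}) k : F I <= F (I :\ k) `|` phi (b k).
Proof. case: (hphi) => _ _ hj _ _; rewrite /F -hj; apply: phi_le; exact: Hs2L. Qed.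

Lemma g_mono (I J : {set 'I_n}) : I \subset J -> g I <= g J.
Proof.
move=> sIJ; apply/joinsP => K _.
apply: le_trans _ (joins_sup (j := K) (P := fun _ => true) (fun K => c K `&` \meet_(i in K) phi (ehat a b J i)) isT).
rewrite /= lexI leIl /=; apply: le_trans (leIr _ _) _.
apply/meetsP => i iK; apply: le_trans (meets_inf _ iK) _.
exact/phi_le/ehat_mono.
Qed.

Lemma g_le (J : {set 'I_n}) : g J <= F J.
Proof.
apply/joinsP => I _; case/andP: (hcb I) => _ hp.
apply: le_trans (_ : (F I `|` \join_(i in I) ~` phi (b i)) `&`
   \meet_(i in I) phi (ehat a b J i) <= _).
  by rewrite lexI leIr andbT; apply: le_trans (leIl _ _) hp.
rewrite meetUl leUx; apply/andP; split.
  apply: (up_gen FmonoB Hs1B (I := I)); first exact: leIl.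
  move=> i iI iJ; apply: le_trans (leIr _ _) _; apply: le_trans (meets_inf _ iI) _.
  by rewrite pe (negbTE iJ).
rewrite shunt; apply/joinsP => i iI; apply: lexUr; rewrite leC.
by apply: le_trans (meets_inf _ iI) (pe_leb _ _).
Qed.

Lemma base_aux (J : {set 'I_n}) m : forall (U W : {set 'I_n}) y, #|~: (U :|: W)| = m ->
  J \subset U -> (forall i, i \in W -> i \notin U) -> y <= F U ->
  (forall i, i \in J -> y <= phi (b i)) ->
  (forall i, i \in U -> i \notin J -> y <= phi (a i)) ->
  (forall i, i \in W -> y <= ~` phi (a i)) -> y <= g J.
Proof.
elim: m => [|m IH] U W y hc sJU dUW hF hb ha hw.
  have hUW i : i \notin U -> i \in W.
    move=> iU; apply/negPn/negP => iW; have : i \in ~: (U :|: W) by rewrite !inE (negbTE iU) (negbTE iW).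
    by move/cards0_eq: hc => ->; rewrite inE.
  apply: le_trans _ (joins_sup (j := U) (P := fun _ => true) (fun K => c K `&` \meet_(i in K) phi (ehat a b J i)) isT).
  rewrite /= lexI; apply/andP; split.
    case/andP: (hcb U) => hm _; apply: le_trans hm.
    rewrite /cminus lexI hF /=; apply/meetsP => i iU; exact/hw/hUW.
  apply/meetsP => i iU; rewrite pe; case: ifP => iJ; first exact: hb.
  by apply: ha => //; rewrite iJ.
have [k kC] : exists k, k \in ~: (U :|: W).
  by apply/set0Pn; apply/eqP => e; rewrite e cards0 in hc.
move: (kC); rewrite !inE negb_or => /andP[kU kW].
have -> : y = (y `&` phi (a k)) `|` (y `&` ~` phi (a k)) by rewrite -meetUr joinxC meetx1.
rewrite leUx; apply/andP; split.
- apply: (IH (k |: U) W).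
  + have -> : ~: ((k |: U) :|: W) = (~: (U :|: W)) :\ k.
      by apply/setP => i; rewrite !inE; case: (i == k); case: (i \in U); case: (i \in W).
    exact: card_dec.
  + by apply: subset_trans sJU (subsetUr _ _).
  + move=> i iW; rewrite !inE negb_or dUW // andbT.
    by apply/eqP => e; rewrite -e iW in kW.
  + by apply: le_trans (leIl _ _) (le_trans hF (FmonoB (subsetUr _ _))).
  + by move=> i iJ; apply: le_trans (leIl _ _) (hb _ iJ).
  + move=> i; rewrite !inE => /orP[/eqP -> _|iU iJ]; first exact: leIr.
    by apply: le_trans (leIl _ _) (ha _ iU iJ).
  + by move=> i iW; apply: le_trans (leIl _ _) (hw _ iW).
- apply: (IH U (k |: W)).
  + have -> : ~: (U :|: (k |: W)) = (~: (U :|: W)) :\ k.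
      by apply/setP => i; rewrite !inE; case: (i == k); case: (i \in U); case: (i \in W).
    exact: card_dec.
  + exact: sJU.
  + by move=> i; rewrite !inE => /orP[/eqP -> //|]; apply: dUW.
  + by apply: le_trans (leIl _ _) hF.
  + by move=> i iJ; apply: le_trans (leIl _ _) (hb _ iJ).
  + by move=> i iU iJ; apply: le_trans (leIl _ _) (ha _ iU iJ).
  + move=> i; rewrite !inE => /orP[/eqP -> |iW]; first exact: leIr.
    by apply: le_trans (leIl _ _) (hw _ iW).
Qed.

Lemma g_ge (J : {set 'I_n}) : F J <= g J.
Proof.
apply: (down_gen Hs2B g_mono) => // K y hy hb.
apply: (base_aux (m := #|~: (K :|: set0)|) (W := set0)) => //.
- by move=> i; rewrite inE.
- by move=> i iK; rewrite iK.
- by move=> i; rewrite inE.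
Qed.
End Part2.

Theorem theorem3p6 (d : Order.disp_t) (L : distrLatticeType d) (n : nat)
  (a b : 'I_n -> L) (f : {set 'I_n} -> L) :
  (0 < n)%N -> (forall i, strict_lt (a i) (b i)) ->
  [/\ (exists p : ('I_n -> L) -> L, polyfun p /\ restricts p a b f)
        <-> (fmonotone f /\ star_cond a b f),
      fmonotone f /\ star_cond a b f ->
        forall (dB : Order.disp_t) (B : ctbDistrLatticeType dB) (phi : L -> B),
          bool_embedding phi ->
          forall (p : ('I_n -> L) -> L) (c : {set 'I_n} -> B),
            polyfun p -> dnf_coeffs phi p c ->
            (restricts p a b f <-> coeff_bounds phi a b f c)
    & fmonotone f /\ star_cond a b f -> polyfun (p0 f) /\ restricts (p0 f) a b f].
Proof.
move=> n0 hlt; have hab : forall i, a i <= b i by move=> i; exact: ltW (hlt i).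
split.
- split; first by move=> [p [hp hr]]; exact: part1_only hp hr.
  move=> [hm hs]; exists (p0 f); split; [exact: polyfun_p0 | exact: p0_restricts].
- move=> [hm hs] dB B phi hphi p c hp hc; case: (hc) => _ cmono _ _ hdnf.
  split.
  + move=> hr; apply: part2_fwd => // J.
    by rewrite /g -(hr J) hdnf.
  + move=> hcb J; case: (hphi) => hinj _ _ _ _; apply: hinj; rewrite hdnf.
    apply: le_anti; apply/andP; split.
    * exact: (g_le hab hphi hm hs hcb J).
    * exact: (g_ge hab hphi hm hs hcb J).
- by move=> [hm hs]; split; [exact: polyfun_p0 | exact: p0_restricts].
Qed.
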